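(* Let $X$ be a nonempty set, $\circ:X\times X\to X$ a binary operation, and $p,q>0$ constants. Let $n\geq 1$ and let $f_1,\dots,f_n:X\to\mathbb{R}$ be $(\circ,p,q)$-convex functions such that \[ 0\leq \max(f_1(x),\dots,f_n(x))\qquad (x\in X). \] Then there exist $\lambda_1,\dots,\lambda_n\geq 0$ with $\lambda_1+\dots+\lambda_n=1$ such that \[ 0\leq \lambda_1 f_1(x)+\dots+\lambda_n f_n(x)\qquad (x\in X). \]
   Context: Given a nonempty set $X$, a binary operation $\circ:X\times X\to X$ and constants $p,q>0$, a function $f:X\to\mathbb{R}$ is called $(\circ,p,q)$-convex if $f(x\circ y)\leq p f(x)+q f(y)$ for all $x,y\in X$. *)

(* Defs.v *)
From Stdlib Require Import Reals.
Open Scope R_scope.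

Definition opq_convex {X : Type} (op : X -> X -> X) (p q : R) (f : X -> R) : Prop :=
  forall x y : X, f (op x y) <= p * f x + q * f y.

(* max (g 0, ..., g (n-1)) for n >= 1 (indices 0..n-1). *)
Fixpoint maxn_R (g : nat -> R) (n : nat) : R :=
  match n with
  | O => g O
  | S O => g O
  | S m => Rmax (maxn_R g m) (g m)
  end.

(* Main.v *)
Require Import Defs.
From Stdlib Require Import Reals Lra Lia Psatz.
Open Scope R_scope.

Section Aux.
Variables (p q : R) (hp : 0 < p) (hq : 0 < q).

Lemma dens_basis (S : R -> R -> Prop)
  (Scl : forall a b c d, S a b -> S c d -> S (p*a+q*c) (p*b+q*d)) :
  S 1 0 -> S 0 1 -> forall N, S ((p+q)^N) 0 /\ S 0 ((p+q)^N).
Proof.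
  intros S10 S01 N; induction N as [|N [IH1 IH2]]; simpl; [split; auto|].
  split.
  - replace ((p+q)*(p+q)^N) with (p*(p+q)^N+q*(p+q)^N) by ring.
    replace 0 with (p*0+q*0) by ring. now apply Scl.
  - replace ((p+q)*(p+q)^N) with (p*(p+q)^N+q*(p+q)^N) by ring.
    replace 0 with (p*0+q*0) by ring. now apply Scl.
Qed.

Lemma dens (S : R -> R -> Prop)
  (S10 : S 1 0) (S01 : S 0 1)
  (Scl : forall a b c d, S a b -> S c d -> S (p*a+q*c) (p*b+q*d)) :
  forall N T, 0 <= T <= (p+q)^N -> exists A B, S A B /\ A + B = (p+q)^N /\
     A <= T <= A + (Rmax p q)^N.
Proof.
  pose proof (dens_basis S Scl S10 S01) as Hb.
  intro N; induction N as [|N IH]; intros T HT.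
  - exists 0, 1; simpl in *; repeat split; auto; lra.
  - simpl in HT |- *.
    assert (HG : 0 < (p+q)^N) by (apply pow_lt; lra).
    assert (Hm : 0 <= (Rmax p q)^N) by (apply pow_le; unfold Rmax; destruct Rle_dec; lra).
    assert (Hpm : p <= Rmax p q) by apply Rmax_l.
    assert (Hqm : q <= Rmax p q) by apply Rmax_r.
    destruct (Rle_or_lt T (p*(p+q)^N)) as [H1|H1].
    + destruct (IH (T/p)) as [A [B [HS [Hs [HA1 HA2]]]]].
      { split. apply Rmult_le_pos; [lra| left; apply Rinv_0_lt_compat; lra].
        apply (Rmult_le_reg_l p); [lra|]. field_simplify; lra. }
      exists (p*A+q*0), (p*B+q*((p+q)^N)); split; [apply Scl; auto; apply Hb|].
      split; [nra|].
      assert (T = p * (T/p)) by (field; lra).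
      split; nra.
    + destruct (IH ((T - p*(p+q)^N)/q)) as [A [B [HS [Hs [HA1 HA2]]]]].
      { split. apply Rmult_le_pos; [lra| left; apply Rinv_0_lt_compat; lra].
        apply (Rmult_le_reg_l q); [lra|]. field_simplify; lra. }
      exists (p*((p+q)^N)+q*A), (p*0+q*B); split; [apply Scl; auto; apply Hb|].
      split; [nra|].
      assert (T = p*(p+q)^N + q * ((T - p*(p+q)^N)/q)) by (field; lra).
      split; nra.
Qed.

Lemma dens2 (S : R -> R -> Prop)
  (S10 : S 1 0) (S01 : S 0 1)
  (Scl : forall a b c d, S a b -> S c d -> S (p*a+q*c) (p*b+q*d)) :
  forall s, 0 <= s <= 1 -> forall d, 0 < d ->
  exists A B G, S A B /\ 0 < G /\ A + B = G /\ s*G - d*G <= A <= s*G.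
Proof.
  intros s Hs d Hd.
  set (m := Rmax p q).
  assert (Hm0 : 0 < m) by (unfold m, Rmax; destruct Rle_dec; lra).
  assert (Hmg : m < p + q) by (unfold m, Rmax; destruct Rle_dec; lra).
  destruct (pow_lt_1_zero (m/(p+q))) with (y := d) as [N HN]; auto.
  { rewrite Rabs_pos_eq. apply (Rmult_lt_reg_r (p+q)); [lra|].
    field_simplify; lra. apply Rmult_le_pos; [lra| left; apply Rinv_0_lt_compat; lra]. }
  specialize (HN N (le_n N)).
  assert (HG : 0 < (p+q)^N) by (apply pow_lt; lra).
  rewrite Rabs_pos_eq in HN by (apply pow_le; apply Rmult_le_pos; [lra| left; apply Rinv_0_lt_compat; lra]).
  assert (Hmn : m^N = (m/(p+q))^N * (p+q)^N).
  { rewrite <- Rpow_mult_distr. f_equal. field. lra. }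
  destruct (dens S S10 S01 Scl N (s*(p+q)^N)) as [A [B [HS [HAB [H1 H2]]]]].
  { split; nra. }
  exists A, B, ((p+q)^N); repeat split; auto; fold m in H2; nra.
Qed.

Lemma L2 (X : Type) (P : X -> Prop) (g h : X -> R)
  (CL2 : forall x y, P x -> P y -> exists z, P z /\ g z <= p * g x + q * g y
                                         /\ h z <= p * h x + q * h y)
  (cov : forall x, P x -> 0 <= g x \/ 0 <= h x) :
  exists a, 0 <= a <= 1 /\ forall x, P x -> 0 <= a * g x + (1 - a) * h x.
Proof.
  assert (nobad : forall x y, P x -> P y -> forall s, 0 <= s <= 1 ->
            s * g x + (1-s) * g y < 0 -> s * h x + (1-s) * h y < 0 -> False).
  { intros x y Px Py s Hs H1 H2.
    set (S := fun A B => exists z, P z /\ g z <= A * g x + B * g y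
                                     /\ h z <= A * h x + B * h y).
    assert (S10 : S 1 0) by (exists x; repeat split; auto; lra).
    assert (S01 : S 0 1) by (exists y; repeat split; auto; lra).
    assert (Scl : forall a b c d, S a b -> S c d -> S (p*a+q*c) (p*b+q*d)).
    { intros a b c d [z1 [Pz1 [Ha1 Ha2]]] [z2 [Pz2 [Hc1 Hc2]]].
      destruct (CL2 z1 z2 Pz1 Pz2) as [z [Pz [Hz1 Hz2]]].
      exists z; repeat split; auto; nra. }
    set (e1 := -(s * g x + (1-s) * g y)).
    set (e2 := -(s * h x + (1-s) * h y)).
    set (K := Rabs (g x) + Rabs (g y) + Rabs (h x) + Rabs (h y) + 1).
    assert (HK : 0 < K) by (unfold K; pose proof (Rabs_pos (g x)); pose proof (Rabs_pos (g y));
       pose proof (Rabs_pos (h x)); pose proof (Rabs_pos (h y)); lra).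
    set (dd := Rmin e1 e2 / (2 * K)).
    assert (Hdd : 0 < dd).
    { unfold dd. apply Rdiv_lt_0_compat; [|lra]. unfold Rmin; destruct Rle_dec; unfold e1, e2; lra. }
    destruct (dens2 S S10 S01 Scl s Hs dd Hdd) as [A [B [G [[z [Pz [Hz1 Hz2]]] [HG [HAB [HA1 HA2]]]]]]].
    assert (HddK : dd * K * 2 <= e1 /\ dd * K * 2 <= e2).
    { unfold dd. replace (Rmin e1 e2 / (2*K) * K * 2) with (Rmin e1 e2) by (field; lra).
      split; [apply Rmin_l|apply Rmin_r]. }
    assert (Hk1 : Rabs (g x - g y) <= K).
    { unfold K. pose proof (Rabs_triang (g x) (- g y)). rewrite Rabs_Ropp in H.
      pose proof (Rabs_pos (h x)); pose proof (Rabs_pos (h y)); unfold Rminus; lra. }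
    assert (Hk2 : Rabs (h x - h y) <= K).
    { unfold K. pose proof (Rabs_triang (h x) (- h y)). rewrite Rabs_Ropp in H.
      pose proof (Rabs_pos (g x)); pose proof (Rabs_pos (g y)); unfold Rminus; lra. }
    set (e := s * G - A).
    assert (He : 0 <= e <= dd * G) by (unfold e; lra).
    assert (Ea : A * g x + B * g y = G * (-e1) - e * (g x - g y)) by (unfold e, e1; nra).
    assert (Eb : A * h x + B * h y = G * (-e2) - e * (h x - h y)) by (unfold e, e2; nra).
    assert (B1 : - e * (g x - g y) <= e * K).
    { pose proof (Rle_abs (-(g x - g y))). rewrite Rabs_Ropp in H. nra. }
    assert (B2 : - e * (h x - h y) <= e * K).
    { pose proof (Rle_abs (-(h x - h y))). rewrite Rabs_Ropp in H. nra. }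
    assert (B3 : e * K <= dd * G * K) by nra.
    assert (Hp1 : G * (dd * K * 2) <= G * e1) by (apply Rmult_le_compat_l; lra).
    assert (Hp2 : G * (dd * K * 2) <= G * e2) by (apply Rmult_le_compat_l; lra).
    assert (Hp3 : 0 < G * e1) by (apply Rmult_lt_0_compat; unfold e1; lra).
    assert (Hp4 : 0 < G * e2) by (apply Rmult_lt_0_compat; unfold e2; lra).
    assert (gneg : g z < 0).
    { rewrite Ea in Hz1. clearbody e e1 e2 dd K. lra. }
    assert (hneg : h z < 0).
    { rewrite Eb in Hz2. clearbody e e1 e2 dd K. lra. }
    destruct (cov z Pz); lra. }
  set (E := fun r => r = 0 \/ exists x, P x /\ h x < 0 /\ r * (g x - h x) = - h x).
  assert (Ebd : forall r, E r -> r <= 1).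
  { intros r [->|[x [Px [Hh Hr]]]]; [lra|].
    destruct (cov x Px) as [Hg|Hg]; [|lra]. nra. }
  destruct (completeness E) as [al [Hub Hlub]].
  { exists 1. intros r Hr; now apply Ebd. }
  { exists 0; now left. }
  assert (Ha0 : 0 <= al) by (apply Hub; now left).
  assert (Ha1 : al <= 1) by (apply Hlub; intros r Hr; now apply Ebd).
  exists al; split; [lra|].
  intros x Px.
  destruct (Rlt_or_le (h x) 0) as [Hh|Hh].
  - destruct (cov x Px) as [Hg|Hg]; [|lra].
    set (r := - h x / (g x - h x)).
    assert (Hr : r * (g x - h x) = - h x) by (unfold r; field; lra).
    assert (r <= al) by (apply Hub; right; exists x; auto).
    nra.
  - destruct (Rle_or_lt 0 (g x)) as [Hg|Hg]; [nra|].
    set (u := h x / (h x - g x)).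
    assert (Hu : u * (h x - g x) = h x) by (unfold u; field; lra).
    assert (al <= u).
    { apply Hlub. intros r [->|[y [Py [Hhy Hr]]]].
      - nra.
      - destruct (cov y Py) as [Hgy|Hgy]; [|lra].
        destruct (Rle_or_lt r u) as [Hru|Hru]; auto. exfalso.
        set (a := g x) in *; set (b := h x) in *; set (c := g y) in *; set (d := h y) in *.
        assert (Hda : d * a > c * b).
        { assert ((r - u) * (c - d) * (b - a) > 0).
          { apply Rmult_gt_0_compat; [|lra]. apply Rmult_gt_0_compat; lra. }
          nra. }
        set (s1 := c / (c - a)). set (s2 := - d / (b - d)).
        assert (E1 : s1 * (c - a) = c) by (unfold s1; field; lra).
        assert (E2 : s2 * (b - d) = - d) by (unfold s2; field; lra).
        assert (Hs12 : s1 < s2).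
        { assert ((s2 - s1) * ((c - a) * (b - d)) > 0) by nra.
          assert ((c-a)*(b-d) > 0) by (apply Rmult_gt_0_compat; lra).
          nra. }
        assert (s1 >= 0) by nra. assert (s2 <= 1) by nra.
        set (s := (s1 + s2) / 2).
        apply (nobad x y Px Py s); unfold s; fold a b c d; try lra; nra. }
    nra.
Qed.

Definition CL (X : Type) (P : X -> Prop) (f : nat -> X -> R) (m : nat) :=
  forall x y, P x -> P y -> exists z, P z /\
    forall i, (i <= m)%nat -> f i z <= p * f i x + q * f i y.

Lemma sum_lin (mu a b : nat -> R) (m : nat) :
  sum_f_R0 (fun i => mu i * (p * a i + q * b i)) m =
  p * sum_f_R0 (fun i => mu i * a i) m + q * sum_f_R0 (fun i => mu i * b i) m.
Proof. induction m; simpl; [ring| rewrite IHm; ring]. Qed.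

Lemma sum_scal (c : R) (a : nat -> R) (m : nat) :
  sum_f_R0 (fun i => c * a i) m = c * sum_f_R0 a m.
Proof. induction m; simpl; [ring| rewrite IHm; ring]. Qed.

Lemma main (X : Type) : forall m (P : X -> Prop) (f : nat -> X -> R),
  CL X P f m -> (forall x, P x -> exists i, (i <= m)%nat /\ 0 <= f i x) ->
  exists lam, (forall i, (i <= m)%nat -> 0 <= lam i) /\ sum_f_R0 lam m = 1 /\
    forall x, P x -> 0 <= sum_f_R0 (fun i => lam i * f i x) m.
Proof.
  induction m as [|m IH]; intros P f Hcl Hcov.
  - exists (fun _ => 1); simpl; split; [intros; lra|split; [lra|]].
    intros x Px. destruct (Hcov x Px) as [i [Hi H]].
    assert (i = 0%nat) by lia. subst. lra.
  - set (Y := fun x => P x /\ f (S m) x < 0).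
    destruct (IH Y f) as [mu [Hmu0 [Hmu1 Hmu]]].
    { intros x y [Px Hx] [Py Hy]. destruct (Hcl x y Px Py) as [z [Pz Hz]].
      exists z; split.
      - split; auto. specialize (Hz (S m) (le_n _)). nra.
      - intros i Hi; apply Hz; lia. }
    { intros x [Px Hx]. destruct (Hcov x Px) as [i [Hi H]].
      exists i; split; auto. destruct (Nat.eq_dec i (S m)); [subst; lra| lia]. }
    set (g := fun x => sum_f_R0 (fun i => mu i * f i x) m).
    destruct (L2 X P g (f (S m))) as [a [Ha Hx]].
    { intros x y Px Py. destruct (Hcl x y Px Py) as [z [Pz Hz]].
      exists z; repeat split; auto.
      unfold g. rewrite <- sum_lin. apply sum_Rle. intros i Hi.
      apply Rmult_le_compat_l; [now apply Hmu0|]. apply Hz; lia. }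
    { intros x Px. destruct (Rlt_or_le (f (S m) x) 0) as [H|H]; [left|right; auto].
      apply Hmu. split; auto. }
    exists (fun i => if (i <=? m)%nat then a * mu i else 1 - a).
    assert (Hleb : (S m <=? m)%nat = false) by (apply Nat.leb_gt; lia).
    repeat split.
    + intros i Hi. destruct (i <=? m)%nat eqn:E; [|lra].
      apply Nat.leb_le in E. apply Rmult_le_pos; [lra| auto].
    + rewrite tech5. cbv beta. rewrite Hleb.
      rewrite (sum_eq _ (fun i => a * mu i)).
      * rewrite sum_scal, Hmu1. ring.
      * intros i Hi. apply Nat.leb_le in Hi. now rewrite Hi.
    + intros x Px. rewrite tech5. cbv beta. rewrite Hleb.
      rewrite (sum_eq _ (fun i => a * (mu i * f i x))).
      * rewrite sum_scal. specialize (Hx x Px). unfold g in Hx. lra.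
      * intros i Hi. apply Nat.leb_le in Hi. rewrite Hi. ring.
Qed.

End Aux.

Lemma maxn_attained (g : nat -> R) (m : nat) :
  exists i, (i <= m)%nat /\ maxn_R g (S m) = g i.
Proof.
  induction m as [|m [i [Hi He]]].
  - exists 0%nat; split; auto.
  - change (maxn_R g (S (S m))) with (Rmax (maxn_R g (S m)) (g (S m))).
    unfold Rmax; destruct Rle_dec.
    + exists (S m); split; auto.
    + exists i; split; auto.
Qed.

Theorem theorem3p3 (X : Type) (x0 : X) (op : X -> X -> X) (p q : R)
  (hp : 0 < p) (hq : 0 < q) (n : nat) (hn : (1 <= n)%nat)
  (f : nat -> X -> R)
  (hconv : forall i, (i < n)%nat -> opq_convex op p q (f i))
  (hmax : forall x : X, 0 <= maxn_R (fun i => f i x) n) :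
  exists lam : nat -> R,
    (forall i, (i < n)%nat -> 0 <= lam i) /\
    sum_f_R0 lam (n - 1) = 1 /\
    (forall x : X, 0 <= sum_f_R0 (fun i => lam i * f i x) (n - 1)).
Proof.
  destruct n as [|m]; [lia|].
  replace (S m - 1)%nat with m by lia.
  destruct (main p q hp hq X m (fun _ => True) f) as [lam [H1 [H2 H3]]].
  - intros x y _ _. exists (op x y); split; auto.
    intros i Hi. apply hconv; lia.
  - intros x _. destruct (maxn_attained (fun i => f i x) m) as [i [Hi He]].
    exists i; split; auto. rewrite <- He; auto.
  - exists lam; repeat split; auto.
    intros i Hi; apply H1; lia.
Qed.
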